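(* Let $p\ge5$ be prime, $a\in\mathbb{C}_p$, $a\ne0$, $A=|a|_p$, $f(x)=\frac{ax}{x^2+a}$, and $t_1=\sqrt{-2a}$, $t_2=-\sqrt{-2a}$. Then for every $0<r<\sqrt A$, $$f(S_r(t_1)\setminus\mathcal P_2)\subseteq S_r(t_2),\qquad f(S_r(t_2)\setminus\mathcal P_2)\subseteq S_r(t_1).$$
   Context: $S_r(t)=\{x\in\mathbb{C}_p:|x-t|_p=r\}$. $\mathcal P_2=\{x\in\mathbb{C}_p:\exists n\in\mathbb{N},\ f^n(x)\in\{\pm\sqrt{-a},\ \pm\sqrt{(-3\pm\sqrt5)a/2}\}\}$. The points $t_1,t_2$ form a $2$-cycle of $f$. *)

(* Defs.v *)
From Stdlib Require Import Reals.
From HB Require Import structures.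
From mathcomp Require Import all_boot all_order all_algebra all_field.
Set Implicit Arguments. Unset Strict Implicit. Unset Printing Implicit Defensive.
Import GRing.Theory.
Local Open Scope ring_scope.

(* Axiomatic characterization of (C_p, |.|_p) up to isometric isomorphism:
   an algebraically closed field K with a non-archimedean absolute value
   restricting to the p-adic absolute value on Q, complete, and in which the
   algebraic closure of Q is dense.  Any such K is isometrically isomorphic to C_p. *)
Definition is_Cp (p : nat) (K : closedFieldType) (absp : K -> R) : Prop :=
  (forall x : K, absp x = R0 <-> x = 0) /\
      (forall x y : K, absp (x * y) = Rmult (absp x) (absp y)) /\
      (forall x y : K, Rle (absp (x + y)) (Rmax (absp x) (absp y))) /\
      absp (p%:R) = Rinv (INR p) /\
      (forall m : nat, coprime m p -> absp (m%:R) = R1) /\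
      (forall u : nat -> K,
          (forall eps, Rlt R0 eps -> exists N : nat, forall m n : nat,
              (N <= m)%N -> (N <= n)%N -> Rlt (absp (u m - u n)) eps) ->
          exists l : K, forall eps, Rlt R0 eps -> exists N : nat, forall n : nat,
              (N <= n)%N -> Rlt (absp (u n - l)) eps) /\
      (forall (x : K) eps, Rlt R0 eps -> exists y : K,
          (exists q : {poly rat}, q != 0 /\ root (map_poly ratr q) y) /\
          Rlt (absp (x - y)) eps).

(* f(x) = a x / (x^2 + a)  (MathComp's total division: value 0 at the poles,
   which are themselves in P_2, so this never matters). *)
Definition fCp (K : fieldType) (a x : K) : K := a * x / (x ^+ 2 + a).

Definition P2_targets (K : fieldType) (a y : K) : Prop :=
  y ^+ 2 = - a \/
  exists w : K, w ^+ 2 = 5%:R /\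
    (y ^+ 2 = (- 3%:R + w) * a / 2%:R \/ y ^+ 2 = (- 3%:R - w) * a / 2%:R).

Definition P2 (K : fieldType) (a x : K) : Prop :=
  exists n : nat, P2_targets a (iter n (fCp a) x).

Definition sphere (K : fieldType) (absp : K -> R) (r : R) (t x : K) : Prop :=
  absp (x - t) = r.

(* Main.v *)
Require Import Defs.
From Stdlib Require Import Reals Lra Lia.
From HB Require Import structures.
From mathcomp Require Import all_boot all_order all_algebra all_field.
From mathcomp Require Import ring.
Local Open Scope ring_scope.
Import GRing.Theory.


Lemma abs_one (K : fieldType) (absp : K -> R)
  (H0 : forall x : K, absp x = R0 <-> x = 0)
  (Hm : forall x y : K, absp (x * y) = Rmult (absp x) (absp y)) :
  absp 1 = R1.
Proof.
have h := Hm 1 1; rewrite mulr1 in h.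
have hn : absp 1 <> R0 by move/H0 => /eqP; rewrite oner_eq0.
apply: (Rmult_eq_reg_l (absp 1)) => //. rewrite -h. lra.
Qed.
Arguments abs_one {K absp}.

Lemma abs_nonneg (K : closedFieldType) (absp : K -> R)
  (Hm : forall x y : K, absp (x * y) = Rmult (absp x) (absp y)) (x : K) :
  Rle R0 (absp x).
Proof.
have [y hy] := @GRing.solve_monicpoly K 2 (fun i => if i == 0%N then x else 0) isT.
have -> : x = y * y.
  move: hy; rewrite big_ord_recl big_ord_recl big_ord0 /= expr0 mulr1 mul0r !addr0 expr2.
  by move=> ->.
rewrite Hm. apply: Rle_0_sqr.
Qed.
Arguments abs_nonneg {K absp}.

Lemma abs_opp_one (p : nat) (K : closedFieldType) (absp : K -> R)
  (hp : prime p) (hK : is_Cp p absp) : absp (-1) = R1.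
Proof.
case: hK => H0 [Hm [Hu [Hpp [Hco _]]]].
have h1 := abs_one H0 Hm.
have hsq : Rmult (absp (-1)) (absp (-1)) = R1 by rewrite -Hm mulrNN mulr1.
have hn := abs_nonneg Hm (-1).
have hp1g : (1 < p)%N := prime_gt1 hp.
have hpm : absp ((p.-1)%:R) = R1.
  apply: Hco. rewrite coprime_sym prime_coprime //.
  apply/negP => /dvdn_leq. case: (p) hp1g => [|[|n]] // _.
  by move=> /(_ isT) /=; rewrite ltnn.
have e : (p.-1)%:R = p%:R + (-1) :> K.
  case: (p) hp1g => // n _.
  by rewrite /= -addn1 natrD addrK.
have hu := Hu (p%:R) (-1). rewrite -e hpm Hpp in hu.
have hp1 : Rlt (Rinv (INR p)) R1.
  have : (1 < p)%N := prime_gt1 hp.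
  move=> /ltP h. have hI : Rlt R1 (INR p) by apply: lt_1_INR; lia.
  apply: (Rmult_lt_reg_l (INR p)); first lra.
  rewrite Rinv_r; lra.
have : Rle R1 (absp (-1)).
  move: hu; rewrite /Rmax; case: Rle_dec => //; lra.
nra.
Qed.
Arguments abs_opp_one {p K absp}.

Lemma abs_opp (p : nat) (K : closedFieldType) (absp : K -> R)
  (hp : prime p) (hK : is_Cp p absp) (x : K) : absp (- x) = absp x.
Proof.
have h := abs_opp_one hp hK. case: hK => H0 [Hm _].
by rewrite -mulN1r Hm h Rmult_1_l.
Qed.
Arguments abs_opp {p K absp}.

Lemma abs_strict (p : nat) (K : closedFieldType) (absp : K -> R)
  (hp : prime p) (hK : is_Cp p absp) (x y : K) :
  Rlt (absp y) (absp x) -> absp (x + y) = absp x.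
Proof.
move=> hl. have ho := abs_opp hp hK. case: hK => H0 [Hm [Hu _]].
have h1 := Hu x y. have h2 := Hu (x + y) (- y).
rewrite addrK ho in h2.
move: h1 h2; rewrite /Rmax; do 2 case: Rle_dec; lra.
Qed.
Arguments abs_strict {p K absp}.

Lemma abs_le_max (p : nat) (K : closedFieldType) (absp : K -> R)
  (hK : is_Cp p absp) (x y : K) (c : R) :
  Rlt (absp x) c -> Rlt (absp y) c -> Rlt (absp (x + y)) c.
Proof.
case: hK => H0 [Hm [Hu _]] h1 h2. have := Hu x y.
rewrite /Rmax; case: Rle_dec; lra.
Qed.
Arguments abs_le_max {p K absp}.

Lemma abs_small (p : nat) (K : closedFieldType) (absp : K -> R)
  (hp : prime p) (hp5 : (5 <= p)%N) (hK : is_Cp p absp) (m : nat) :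
  (0 < m)%N -> (m < 5)%N -> absp (m%:R) = R1.
Proof.
move=> h0 h5. case: hK => _ [_ [_ [_ [Hco _]]]]. apply: Hco.
rewrite coprime_sym prime_coprime //. apply/negP => /(dvdn_leq h0) h.
have : (p < 5)%N by apply: leq_ltn_trans h h5. by rewrite ltnNge hp5.
Qed.
Arguments abs_small {p K absp}.

Lemma key (p : nat) (K : closedFieldType) (absp : K -> R)
  (hp : prime p) (hp5 : (5 <= p)%N) (hK : is_Cp p absp)
  (a t : K) (ha : a != 0) (ht : t ^+ 2 = - (2%:R * a)) (r : R) :
  Rlt R0 r -> Rlt r (sqrt (absp a)) ->
  forall x : K, absp (x - t) = r -> absp (fCp a x + t) = r.
Proof.
move=> hr0 hrA x hx.
have ho := abs_opp hp hK.
have hst := abs_strict hp hK.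
have hlm := abs_le_max hK.
have h2 : absp (2%:R : K) = R1 := abs_small hp hp5 hK 2 isT isT.
have h3 : absp (3%:R : K) = R1 := abs_small hp hp5 hK 3 isT isT.
case: (hK) => H0 [Hm [Hu _]].
have hnn := abs_nonneg Hm.
set h := x - t. have ex : x = t + h by rewrite /h addrC subrK.
set A := absp a.
have hA0 : Rlt R0 A.
  have := hnn a. have : A <> R0 by move/H0 => e; move: ha; rewrite e eqxx. rewrite /A; lra.
have hsA := sqrt_lt_R0 _ hA0.
have hsqA := sqrt_sqrt _ (Rlt_le _ _ hA0).
have habt : absp t = sqrt A.
  have e : Rmult (absp t) (absp t) = A by rewrite -Hm -expr2 ht ho Hm h2 Rmult_1_l.
  rewrite -e sqrt_square //; apply: hnn.
have hth : Rlt (absp (t * h)) A.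
  rewrite Hm habt hx.
  have := Rmult_lt_compat_l (sqrt A) r (sqrt A) hsA hrA; lra.
have hhh : Rlt (absp (h * h)) A.
  rewrite Hm hx.
  have := Rmult_lt_compat_l (sqrt A) r (sqrt A) hsA hrA.
  have := Rmult_lt_compat_r r r (sqrt A) hr0 hrA; lra.
have h2th : Rlt (absp (2%:R * t * h)) A by rewrite -mulrA Hm h2 Rmult_1_l.
have hnum : absp (h * (- (3%:R * a) + t * h)) = Rmult r A.
  rewrite Hm hx hst; first by rewrite ho Hm; rewrite h3 Rmult_1_l.
  by rewrite ho (Hm 3%:R) h3 Rmult_1_l.
have hden : absp (- a + (2%:R * t * h + h * h)) = A.
  rewrite hst ?ho //. exact: hlm.
have eden : x ^+ 2 + a = - a + (2%:R * t * h + h * h).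
  apply/eqP; rewrite -subr_eq0; apply/eqP.
  transitivity (t ^+ 2 + 2%:R * a); first by rewrite ex; ring.
  by rewrite ht; ring.
have den0 : x ^+ 2 + a != 0.
  apply/eqP => e. move: hden; rewrite -eden e.
  rewrite (proj2 (H0 0) erefl) => hd. rewrite -hd in hA0. lra.
have enum : a * x + t * (x ^+ 2 + a) = h * (- (3%:R * a) + t * h).
  apply/eqP; rewrite -subr_eq0; apply/eqP.
  transitivity ((t + 2%:R * h) * (t ^+ 2 + 2%:R * a)); first by rewrite ex; ring.
  by rewrite ht; ring.
have ef : fCp a x + t = (a * x + t * (x ^+ 2 + a)) / (x ^+ 2 + a).
  by rewrite /fCp mulrDl mulfK.
have hinv : Rmult (absp ((x ^+ 2 + a)^-1)) A = R1.
  rewrite -hden -eden -Hm mulVf // (abs_one H0 Hm) //.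
rewrite ef enum Hm hnum.
rewrite Rmult_assoc (Rmult_comm A) hinv Rmult_1_r //.
Qed.
Arguments key {p K absp}.


Theorem theorem4p4 (p : nat) (K : closedFieldType) (absp : K -> R)
  (hp : prime p) (hp5 : (5 <= p)%N) (hK : is_Cp p absp)
  (a t1 t2 : K) (ha : a != 0)
  (ht1 : t1 ^+ 2 = - (2%:R * a)) (ht2 : t2 = - t1) :
  forall r : R, Rlt R0 r -> Rlt r (sqrt (absp a)) ->
    (forall x : K, sphere absp r t1 x -> ~ P2 a x -> sphere absp r t2 (fCp a x)) /\
    (forall x : K, sphere absp r t2 x -> ~ P2 a x -> sphere absp r t1 (fCp a x)).
Proof.
move=> r hr0 hrA; split => x hx _; rewrite /sphere in hx *.
  rewrite ht2 opprK. exact: (key hp hp5 hK _ _ ha ht1 _ hr0 hrA _ hx).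
have ht2' : t2 ^+ 2 = - (2%:R * a) by rewrite ht2 sqrrN.
have -> : t1 = - t2 by rewrite ht2 opprK.
rewrite opprK. exact: (key hp hp5 hK _ _ ha ht2' _ hr0 hrA _ hx).
Qed.
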